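(* Let $r\ge1$ and $f,g\in \mathrm{M}_r(\mathbb{C})[Z]$. Define $P_f(x,y_1)=\det(y_1I-f(xI))\in\mathbb{C}[x,y_1]$, $P_g(x,y_2)=\det(y_2I-g(xI))\in\mathbb{C}[x,y_2]$, and $$R_{f,g}(y_1,y_2)=\mathrm{Res}_x\left(P_f(x,y_1),P_g(x,y_2)\right),\qquad T_{f,g}(y_1,y_2)=\mathrm{Res}_x\left(P_f(x,y_1),\,y_2-\det(g(xI))\right),$$ both in $\mathbb{C}[y_1,y_2]$, where $\mathrm{Res}_x$ is the resultant with respect to $x$. (i) If every eigenvalue of $f(xI)$ and every eigenvalue of $g(xI)$ are multiplicatively independent functions in $\overline{\mathbb{C}(x)}$, then $R_{f,g}(y_1,y_2)$ has no factor of the form $y_1^iy_2^j-\rho$ or $y_1^i-\rho y_2^j$ with $i,j$ nonnegative integers not both zero and $\rho$ a root of unity. (ii) If every eigenvalue of $f(xI)$ and $\det(g(xI))$ are multiplicatively independent functions in $\overline{\mathbb{C}(x)}$, then $T_{f,g}(y_1,y_2)$ has no factor of the form $y_1^iy_2^j-\rho$ or $y_1^i-\rho y_2^j$ with $i,j$ nonnegative integers not both zero and $\rho$ a root of unity.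
   Context: A matrix polynomial $f\in\mathrm{M}_r(\mathbb{C})[Z]$ is $f(Z)=C_dZ^d+\cdots+C_0$ with $C_i\in\mathrm{M}_r(\mathbb{C})$, $C_d\ne0$, $d\ge1$; $f(xI)=\sum_iC_ix^i$ for a scalar variable $x$, $I$ the identity matrix. Eigenvalues of $f(xI)$ are taken in an algebraic closure $\overline{\mathbb{C}(x)}$ of $\mathbb{C}(x)$. Two functions $h_1,h_2\in\overline{\mathbb{C}(x)}$ are multiplicatively independent if there is no $(k_1,k_2)\in\mathbb{Z}^2\setminus\{(0,0)\}$ with $h_1^{k_1}h_2^{k_2}=1$. *)

(* Defs.v *)
(* C = R[i] (complex numbers over an arbitrary realType R,
   i.e. a copy of the complex field). *)
From HB Require Import structures.
From mathcomp Require Import all_boot all_algebra.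
From mathcomp Require Import fraction complex reals.
Set Implicit Arguments. Unset Strict Implicit. Unset Printing Implicit Defensive.
Import GRing.Theory.
Local Open Scope ring_scope.

(* f(xI) = sum_k C_k x^k, for f = sum_k C_k Z^k in M_r(C)[Z], as an
   r x r matrix with entries in C[x]. *)
Definition evalXI (R : realType) (n : nat) (f : {poly 'M[R[i]]_n.+1})
  : 'M[{poly R[i]}]_n.+1 :=
  \matrix_(i, j) \poly_(k < size f) ((f`_k) i j).

(* C[y1,y2] is represented as {poly {poly C}}: inner variable y1, outer y2.
   Polynomials in x with coefficients in C[y1,y2] are {poly {poly {poly C}}}. *)
Definition y1 (R : realType) : {poly {poly R[i]}} := ('X)%:P.
Definition y2 (R : realType) : {poly {poly R[i]}} := 'X.

Definition liftX (R : realType) (p : {poly R[i]}) : {poly {poly {poly R[i]}}} :=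
  map_poly (fun c : R[i] => c%:P%:P) p.

Definition Pf (R : realType) (n : nat) (f : {poly 'M[R[i]]_n.+1})
  : {poly {poly {poly R[i]}}} :=
  \det ((y1 R)%:P%:M - map_mx (@liftX R) (evalXI f)).

Definition Pg (R : realType) (n : nat) (g : {poly 'M[R[i]]_n.+1})
  : {poly {poly {poly R[i]}}} :=
  \det ((y2 R)%:P%:M - map_mx (@liftX R) (evalXI g)).

Definition Rfg (R : realType) (n : nat) (f g : {poly 'M[R[i]]_n.+1})
  : {poly {poly R[i]}} := resultant (Pf f) (Pg g).

Definition Tfg (R : realType) (n : nat) (f g : {poly 'M[R[i]]_n.+1})
  : {poly {poly R[i]}} :=
  resultant (Pf f) ((y2 R)%:P - liftX (\det (evalXI g))).

Definition root_of_unity (F : pzRingType) (z : F) : Prop :=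
  exists2 k : nat, (0 < k)%N & z ^+ k = 1.

Definition mult_indep (L : unitRingType) (h1 h2 : L) : Prop :=
  forall k1 k2 : int, h1 ^ k1 * h2 ^ k2 = 1 -> k1 = 0 /\ k2 = 0.

Definition has_special_factor (R : realType) (P : {poly {poly R[i]}}) : Prop :=
  exists (i j : nat) (rho : R[i]),
    [/\ (0 < i + j)%N, root_of_unity rho &
      (exists q, P = q * ((y1 R) ^+ i * (y2 R) ^+ j - rho%:P%:P)) \/
      (exists q, P = q * ((y1 R) ^+ i - rho%:P%:P * (y2 R) ^+ j))].

(* L (with the embedding iota) is algebraic over the field K. Together with
   L being algebraically closed, this makes L an algebraic closure of K. *)
Definition algebraic_ext (K L : fieldType) (iota : {rmorphism K -> L}) : Prop :=
  forall z : L, exists2 p : {poly K}, p != 0 & root (map_poly iota p) z.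

Definition embXI (R : realType) (n : nat) (L : fieldType)
  (iota : {rmorphism {fraction {poly R[i]}} -> L}) (f : {poly 'M[R[i]]_n.+1})
  : 'M[L]_n.+1 :=
  map_mx (fun p => iota (tofrac p)) (evalXI f).

(* Main.v *)
Require Import Defs.
From HB Require Import structures.
From mathcomp Require Import all_boot all_algebra.
From mathcomp Require Import fraction complex reals.
From mathcomp Require Import zify.
Set Implicit Arguments. Unset Strict Implicit. Unset Printing Implicit Defensive.
Import GRing.Theory.
Local Open Scope ring_scope.
Lemma arith (a b c d e : nat) : (b <= d.-1 -> c <= e -> a <= (b + c).-1 -> a <= d.-1 + e.-1)%N.
Proof. rewrite -!subn1. lia. Qed.

Lemma res_common_root (A : comNzRingType) (K : closedFieldType)
  (th : {rmorphism A -> K}) (p q : {poly A}) :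
  (th (lead_coef p) != 0) || (th (lead_coef q) != 0) ->
  th (resultant p q) = 0 ->
  exists z, root (map_poly th p) z && root (map_poly th q) z.
Proof.
move=> hlc hres.
pose dp := (size p).-1; pose dq := (size q).-1.
pose p' := map_poly th p; pose q' := map_poly th q.
have hM : map_mx th (Sylvester_mx p q) =
   col_mx (lin1_mx (poly_rV \o p' \o* @rVpoly K dq))
          (lin1_mx (poly_rV \o q' \o* @rVpoly K dp)).
  rewrite /Sylvester_mx map_col_mx; congr col_mx;
  by apply: map_lin1_mx => v /=; rewrite map_poly_rV rmorphM /= map_rVpoly.
have : \det (map_mx th (Sylvester_mx p q)) == 0.
  by rewrite det_map_mx /resultant in hres *; rewrite hres.
rewrite hM => /det0P [w nzw].
rewrite -[w]hsubmxK mul_row_col !mul_rV_lin1 /=.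
set u := rVpoly _; set v := rVpoly _ => H0.
have szp' : (size p' <= size p)%N by exact: size_poly.
have szq' : (size q' <= size q)%N by exact: size_poly.
have szu : (size u <= dq)%N by apply: size_poly.
have szv : (size v <= dp)%N by apply: size_poly.
have Huv : u * p' + v * q' = 0.
  rewrite -[LHS](@poly_rV_K _ (dq + dp)); last first.
    rewrite (leq_trans (size_polyD _ _)) // geq_max.
    rewrite /dp /dq in szu szv.
    apply/andP; split.
      by apply: (arith szu szp'); apply: size_polyMleq.
    rewrite addnC; apply: (arith szv szq'); apply: size_polyMleq.
  by rewrite linearD /= H0 linear0.
have nzuv : (u != 0) || (v != 0).
  apply: contraNT nzw; rewrite negb_or !negbK => /andP [/eqP u0 /eqP v0].
  apply/eqP; rewrite -[w]hsubmxK -row_mx0; congr row_mx.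
    by rewrite -[LHS]rVpolyK -/u u0 linear0.
  by rewrite -[LHS]rVpolyK -/v v0 linear0.
have [gt1|le1] := ltnP 1 (size (gcdp p' q')).
  have /closed_rootP [z hz] : size (gcdp p' q') != 1 by rewrite gtn_eqF.
  exists z; apply/andP; split; apply: root_dvdp hz;
    [exact: dvdp_gcdl | exact: dvdp_gcdr].
exfalso.
have hp'q' : (p' != 0) || (q' != 0).
  case/orP: hlc => h; apply/orP; [left|right];
  by rewrite -size_poly_eq0 size_map_poly_id0 // size_poly_eq0; apply: contraNneq h => ->; rewrite lead_coef0 rmorph0.
have cop : coprimep p' q'.
  rewrite /coprimep eqn_leq le1 lt0n size_poly_eq0 gcdp_eq0 negb_and.
  by case/orP: hp'q' => ->; rewrite ?orbT.
case/orP: hlc => h.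
- have szp : size p' = size p by rewrite size_map_poly_id0.
  have p'0 : p' != 0 by rewrite -size_poly_eq0 szp size_poly_eq0; apply: contraNneq h => ->; rewrite lead_coef0 rmorph0.
  have : p' %| v * q'.
    have -> : v * q' = - (u * p') by apply/eqP; rewrite -addr_eq0 addrC Huv.
    by rewrite dvdpNr dvdp_mull.
  rewrite Gauss_dvdpl // => dv.
  have v0 : v = 0.
    apply: contraTeq dv => nzv; apply/negP => /(dvdp_leq nzv); rewrite szp.
    move=> H; have H2 : (0 < size p)%N by rewrite -szp lt0n size_poly_eq0.
    by move: szv H H2; rewrite /dp -subn1; lia.
  move: Huv; rewrite v0 mul0r addr0 => /eqP; rewrite mulf_eq0 (negPf p'0) orbF => /eqP u0.
  by move: nzuv; rewrite u0 v0 eqxx.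
- have szq : size q' = size q by rewrite size_map_poly_id0.
  have q'0 : q' != 0 by rewrite -size_poly_eq0 szq size_poly_eq0; apply: contraNneq h => ->; rewrite lead_coef0 rmorph0.
  have : q' %| u * p'.
    have -> : u * p' = - (v * q') by apply/eqP; rewrite -addr_eq0 Huv.
    by rewrite dvdpNr dvdp_mull.
  rewrite Gauss_dvdpl 1?coprimep_sym // => du.
  have u0 : u = 0.
    apply: contraTeq du => nzu; apply/negP => /(dvdp_leq nzu); rewrite szq.
    move=> H; have H2 : (0 < size q)%N by rewrite -szq lt0n size_poly_eq0.
    by move: szu H H2; rewrite /dq -subn1; lia.
  move: Huv; rewrite u0 mul0r add0r => /eqP; rewrite mulf_eq0 (negPf q'0) orbF => /eqP v0.
  by move: nzuv; rewrite u0 v0 eqxx.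
Qed.
Lemma res_root0 (A : comNzRingType) (K : fieldType)
  (th : {rmorphism A -> K}) (p q : {poly A}) z :
  p \is monic -> root (map_poly th p) z -> root (map_poly th q) z ->
  th (resultant p q) = 0.
Proof.
move=> mp rp rq.
have [sp1|sp1] := leqP (size p) 1.
  have mpt : map_poly th p \is monic := monic_map th mp.
  have spt : (size (map_poly th p) <= 1)%N by apply: leq_trans sp1; exact: size_poly.
  have [c e] : exists c, map_poly th p = c%:P by exists (map_poly th p)`_0; apply: size1_polyC.
  by move: mpt rp; rewrite e /root hornerC monicE lead_coefC => /eqP ->; rewrite oner_eq0.
have [sq1|sq1] := leqP (size q) 1; last first.
  have [uv _ Huv] := resultant_in_ideal sp1 sq1.
  have := congr1 (fun r => (map_poly th r).[z]) Huv.
  rewrite /= map_polyC hornerC => ->.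
  rewrite rmorphD !rmorphM /= hornerD !hornerM.
  by rewrite (rootP rp) (rootP rq) !mulr0 addr0.
have [c e] : exists c, q = c%:P by exists q`_0; apply: size1_polyC.
have c0 : th c = 0 by move: rq; rewrite e map_polyC /root hornerC => /eqP.
rewrite /resultant -det_map_mx.
have dp0 : (0 < (size p).-1)%N by rewrite -subn1 subn_gt0.
pose i0 : 'I_((size q).-1 + (size p).-1) := rshift _ (Ordinal dp0).
rewrite (expand_det_row _ i0) big1 // => j _.
rewrite mxE Sylvester_mxE /i0.
rewrite (unsplitK (inr _ (Ordinal dp0)) : split (rshift _ _) = inr _) /=.
rewrite subn0 mulr1n.
have -> : q`_j = (c%:P)`_j by rewrite -e.
rewrite coefC.
by case: eqP; rewrite ?c0 ?rmorph0 mul0r.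
Qed.
Definition hm (A : nzRingType) (K : comNzRingType) (f : {rmorphism A -> K}) (u : K)
  : {rmorphism {poly A} -> K} :=
  horner_morph (fun x => mulrC u (f x)).

Lemma hmE (A : nzRingType) (K : comNzRingType) (f : {rmorphism A -> K}) (u : K) p :
  hm f u p = (map_poly f p).[u].
Proof. by []. Qed.

Section Emb.
Variables (C L : closedFieldType) (iota : {rmorphism {fraction {poly C}} -> L}).

Definition phi : {rmorphism {poly C} -> L} := iota \o (@tofrac {poly C}).
Definition kap : {rmorphism C -> L} := phi \o polyC.
Definition tL : L := phi 'X.

Lemma phi_inj : injective phi.
Proof.
move=> p q /= /fmorph_inj /eqP; rewrite tofrac_eq => /eqP //.
Qed.

Lemma alg_const w a : w != 0 -> root (map_poly kap w) a -> exists c, a = kap c.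
Proof.
move=> nzw; have [r Er] := closed_field_poly_normal w.
rewrite Er linearZ /= rmorph_prod /= rootZ; last first.
  by rewrite fmorph_eq0 tofrac_eq0 polyC_eq0 lead_coef_eq0.
rewrite (eq_bigr (fun z => 'X - (kap z)%:P)); last first.
  by move=> z _; rewrite rmorphB /= map_polyX map_polyC.
rewrite -(big_map kap xpredT (fun z => 'X - z%:P)) root_prod_XsubC.
by case/mapP => c _ ->; exists c.
Qed.

Lemma kapE c : kap c = phi c%:P. Proof. by []. Qed.

Lemma nonconst w s m : w != 0 -> s != 0 -> (0 < m)%N ->
  ~~ root (map_poly kap w) (kap s * tL ^+ m).
Proof.
move=> nzw nzs m0; apply/negP => /(alg_const nzw) [c].
rewrite /tL !kapE -rmorphXn -rmorphM => /phi_inj /(congr1 (size : {poly C} -> nat)).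
rewrite size_mul ?expf_neq0 ?polyX_eq0 ?polyC_eq0 // !size_polyC nzs.
have -> : size ('X^m : {poly C}) = m.+1 by apply: size_polyXn.
by case: (c != 0) => //=; case: m m0.
Qed.
End Emb.
Lemma strip_X (R : idomainType) (p : {poly R}) : p != 0 ->
  exists e p0, p = p0 * 'X^e /\ p0`_0 != 0.
Proof.
move: {2}(size p) (leqnn (size p)) => n; elim: n p => [|n IH] p.
  by rewrite leqn0 size_poly_eq0 => ->.
move=> sp nzp; have [c0|c0] := eqVneq p`_0 0; last by exists 0%N, p; rewrite expr0 mulr1.
have Ep : p = drop_poly 1 p * 'X.
  by apply/polyP => i; rewrite coefMX; case: i => [|i] /=; rewrite ?c0 // coef_drop_poly addn1.
have nz1 : drop_poly 1 p != 0 by apply: contraNneq nzp => h; rewrite Ep h mul0r.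
have [|e [p0 [E1 E2]]] := IH (drop_poly 1 p) _ nz1.
  by rewrite size_drop_poly; move: sp nzp; rewrite -size_poly_eq0; lia.
by exists e.+1, p0; split => //; rewrite Ep E1 exprS -mulrA [_ * 'X]mulrC.
Qed.
Section Core.
Variables (C L : closedFieldType) (iota : {rmorphism {fraction {poly C}} -> L}).
Local Notation phi := (phi iota).
Local Notation kap := (kap iota).
Local Notation tL := (tL iota).

Definition ev1 (a : L) : {rmorphism {poly C} -> L} := hm kap a.
Definition H2 (y xi : L) : {rmorphism {poly {poly C}} -> L} := hm (ev1 y) xi.

Lemma ev1C a c : ev1 a c%:P = kap c.
Proof. by rewrite /ev1 hmE map_polyC hornerC. Qed.
Lemma ev1X a : ev1 a 'X = a.
Proof. by rewrite /ev1 hmE map_polyX hornerX. Qed.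
Lemma H2C y xi w : H2 y xi w%:P = ev1 y w.
Proof. by rewrite /H2 hmE map_polyC hornerC. Qed.
Lemma H2X y xi : H2 y xi 'X = xi.
Proof. by rewrite /H2 hmE map_polyX hornerX. Qed.
Lemma H2mapC y xi w : H2 y xi (map_poly polyC w) = ev1 xi w.
Proof.
rewrite /H2 hmE -map_poly_comp /ev1 hmE; congr (_.[_]).
by apply: eq_map_poly => c /=; rewrite ev1C.
Qed.

Lemma map_H2_C a b (P : {poly {poly C}}) :
  map_poly (H2 a b) (map_poly polyC P) = map_poly (ev1 a) P.
Proof. by rewrite -map_poly_comp; apply: eq_map_poly => w /=; rewrite H2C. Qed.
Lemma map_H2_mapC a b (P : {poly {poly C}}) :
  map_poly (H2 a b) (map_poly (map_poly polyC) P) = map_poly (ev1 b) P.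
Proof. by rewrite -map_poly_comp; apply: eq_map_poly => w /=; rewrite H2mapC. Qed.


Lemma nc_ev1 a w : (exists s m, [/\ s != 0, (0 < m)%N & a = kap s * tL ^+ m]) ->
  w != 0 -> ev1 a w != 0.
Proof.
move=> [s [m [nzs m0 ->]]] nzw; have := nonconst iota nzw nzs m0.
by rewrite /root /ev1 hmE.
Qed.

Lemma ev1_kap c w : ev1 (kap c) w = kap w.[c].
Proof.
by rewrite /ev1 hmE -horner_map.
Qed.

Lemma core (Pa Pb ca cb S : {poly {poly C}}) (a b : L) :
  Pa != 0 -> Pb != 0 -> ca \is monic -> cb \is monic ->
  (forall y xi, H2 y xi Pa = H2 xi y ca) ->
  (forall y xi, H2 y xi Pb = H2 xi y cb) ->
  (exists q, resultant (map_poly polyC Pa) (map_poly (map_poly polyC) Pb) = q * S) ->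
  H2 a b S = 0 -> b != 0 ->
  (exists s m, [/\ s != 0, (0 < m)%N & a = kap s * tL ^+ m]) \/
  (exists s m, [/\ s != 0, (0 < m)%N & b = kap s * tL ^+ m]) ->
  exists h1 h2, [/\ root (map_poly phi ca) h1, root (map_poly phi cb) h2,
                   h2 != 0 & H2 h1 h2 S = 0].
Proof.
move=> nzPa nzPb mca mcb compa compb [q hq] Sab nzb hnc.
have [x0 /andP [r1 r2]] : exists x0,
    root (map_poly (H2 a b) (map_poly polyC Pa)) x0 &&
    root (map_poly (H2 a b) (map_poly (map_poly polyC) Pb)) x0.
  apply: res_common_root; last by rewrite hq rmorphM /= Sab mulr0.
  rewrite lead_coef_map_eq ?polyC_eq0 ?lead_coef_eq0 //.
  rewrite lead_coef_map_eq ?map_polyC_eq0 ?lead_coef_eq0 //.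
  rewrite H2C H2mapC.
  case: hnc => h; apply/orP; [left|right]; apply: nc_ev1 h _;
  by rewrite lead_coef_eq0.
rewrite map_H2_C /root -hmE -/(H2 a x0 Pa) compa in r1.
rewrite map_H2_mapC /root -hmE -/(H2 b x0 Pb) compb in r2.
have [e [cb0 [Ecb cb00]]] := strip_X (monic_neq0 mcb).
have mcb0 : cb0 \is monic by move: mcb; rewrite Ecb monicE lead_coef_Mmonic ?monicXn.
pose S' : {poly {poly {poly C}}} := map_poly (map_poly polyC) S.
pose M := resultant (map_poly polyC cb0) S'.
pose N := resultant ca M.
have hS' : forall (th : {rmorphism {poly C} -> L}) y,
    map_poly (hm th y) S' = map_poly (hm (th \o polyC) y) S.
  move=> th y; rewrite -map_poly_comp; apply: eq_map_poly => w /=.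
  by rewrite !hmE -map_poly_comp.
have hcb0 : forall (th : {rmorphism {poly C} -> L}) y,
    map_poly (hm th y) (map_poly polyC cb0) = map_poly th cb0.
  by move=> th y; rewrite -map_poly_comp; apply: eq_map_poly => w /=; rewrite hmE map_polyC hornerC.
have N0 : ev1 x0 N = 0.
  apply: (res_root0 mca r1).
  rewrite /root -hmE; apply/eqP.
  apply: (res_root0 (z := b)).
  - by rewrite monic_map.
  - rewrite hcb0; move: r2; rewrite /H2 hmE Ecb rmorphM /= hornerM rmorphXn /= map_polyX hornerXn.
    by rewrite mulf_eq0 expf_eq0 (negPf nzb) andbF orbF.
  - rewrite hS' /root.
    have -> : map_poly (hm (ev1 x0 \o polyC) a) S = map_poly (ev1 a) S.
      apply: eq_map_poly => w /=; rewrite hmE /ev1 hmE; congr (_.[_]).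
      by apply: eq_map_poly => c /=; rewrite -/(ev1 x0 _) ev1C.
    by rewrite -hmE -/(H2 a b S) Sab.
have [N0'|nzN] := eqVneq N 0; last first.
  exfalso.
  have [c0 Ex0] : exists c, x0 = kap c.
    by apply: (@alg_const _ _ iota N x0 nzN); rewrite /root -hmE -/(ev1 x0 N) N0.
  have conv : forall (cc : {poly {poly C}}) y,
      H2 x0 y cc = ev1 y (map_poly (horner_eval c0) cc).
    move=> cc y; rewrite /H2 hmE /ev1 hmE -map_poly_comp; congr (_.[_]).
    by apply: eq_map_poly => w /=; rewrite Ex0 -/(ev1 _ _) ev1_kap.
  case: hnc => h.
  - have := nc_ev1 (w := map_poly (horner_eval c0) ca) h.
    rewrite -conv (eqP r1) eqxx monic_neq0 //; first by move/(_ isT).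
    exact: (monic_map (horner_eval c0) mca).
  - have := nc_ev1 (w := map_poly (horner_eval c0) cb) h.
    by have := eqP r2; rewrite conv => ->; rewrite eqxx monic_neq0 //;
      [move/(_ isT) | exact: (monic_map (horner_eval c0) mcb)].
have phinz : forall x, x != 0 -> phi x != 0.
  by move=> x; apply: contra_neq => h; apply: (@phi_inj _ _ iota); rewrite h rmorph0.
have [h1 /andP [q1 q2]] : exists h1, root (map_poly phi ca) h1 && root (map_poly phi M) h1.
  apply: res_common_root; last by rewrite -/N N0' rmorph0.
  by rewrite phinz // lead_coef_eq0 monic_neq0.
have [h2 /andP [q3 q4]] : exists h2, root (map_poly (hm phi h1) (map_poly polyC cb0)) h2
     && root (map_poly (hm phi h1) S') h2.
  apply: res_common_root; last by move: q2; rewrite /root -hmE => /eqP.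
  rewrite lead_coef_map_eq ?polyC_eq0 ?lead_coef_eq0 ?monic_neq0 //.
  by rewrite hmE map_polyC hornerC phinz // lead_coef_eq0 monic_neq0.
rewrite hcb0 in q3; rewrite hS' in q4.
exists h1, h2; split => //.
- by rewrite Ecb rmorphM /root hornerM (eqP q3) mul0r.
- apply: contraTneq q3 => ->; rewrite /root horner_coef0 coef_map.
  exact: phinz.
- by move: q4; rewrite /root => /eqP.
Qed.

End Core.
Section Conn.
Variables (C L : closedFieldType) (iota : {rmorphism {fraction {poly C}} -> L}).
Local Notation phi := (phi iota).
Local Notation kap := (kap iota).
Local Notation tL := (tL iota).
Local Notation ev1 := (ev1 iota).
Local Notation H2 := (H2 iota).

Definition Pc n (M : 'M[{poly C}]_n.+1) : {poly {poly C}} :=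
  \det ('X%:P%:M - map_mx (map_poly polyC) M).

Lemma char_horner (K : comNzRingType) n (A : 'M[K]_n) y :
  (char_poly A).[y] = \det (y%:M - A).
Proof.
rewrite /char_poly -horner_evalE -det_map_mx; congr (\det _).
by apply/matrixP => i j; rewrite !mxE /= rmorphB rmorphMn /= !horner_evalE hornerX hornerC.
Qed.

Lemma H2_Pc n (M : 'M[{poly C}]_n.+1) y xi :
  H2 y xi (Pc M) = \det (y%:M - map_mx (ev1 xi) M).
Proof.
rewrite /Pc -det_map_mx; congr (\det _).
by apply/matrixP => i j; rewrite !mxE rmorphB rmorphMn /= H2C ev1X H2mapC.
Qed.

Lemma H2_char n (M : 'M[{poly C}]_n.+1) y xi :
  H2 xi y (char_poly M) = \det (y%:M - map_mx (ev1 xi) M).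
Proof.
rewrite /char_poly /char_poly_mx -det_map_mx; congr (\det _).
by apply/matrixP => i j; rewrite !mxE rmorphB rmorphMn /= H2X H2C.
Qed.


Lemma Pc_neq0 n (M : 'M[{poly C}]_n.+1) : Pc M != 0.
Proof.
have nz : char_poly (map_mx (ev1 0) M) != 0 by apply: monic_neq0; apply: char_poly_monic.
have [y ny] := closed_nonrootP _ nz.
apply: contraNneq ny => h; rewrite /root char_horner -H2_Pc h rmorph0 //.
Qed.

Lemma compatP n (M : 'M[{poly C}]_n.+1) y xi : H2 y xi (Pc M) = H2 xi y (char_poly M).
Proof. by rewrite H2_Pc H2_char. Qed.

Definition Qc (d : {poly C}) : {poly {poly C}} := 'X%:P - map_poly polyC d.

Lemma H2_Qc d y xi : H2 y xi (Qc d) = y - ev1 xi d.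
Proof. by rewrite /Qc rmorphB /= H2C ev1X H2mapC. Qed.

Lemma compatQ d y xi : H2 y xi (Qc d) = H2 xi y ('X - d%:P).
Proof. by rewrite H2_Qc rmorphB /= H2X H2C. Qed.

Lemma Qc_neq0 d : Qc d != 0.
Proof.
apply/eqP => h; have := H2_Qc d (ev1 0 d + 1) 0.
by rewrite h rmorph0 addrAC subrr add0r => /eqP; rewrite eq_sym oner_eq0.
Qed.

Definition Sf (form : bool) i j (rho : C) : {poly {poly C}} :=
  if form then ('X%:P) ^+ i * 'X ^+ j - rho%:P%:P else ('X%:P) ^+ i - rho%:P%:P * 'X ^+ j.

Lemma H2_S form i j rho a b : H2 a b (Sf form i j rho) =
  if form then a ^+ i * b ^+ j - kap rho else a ^+ i - kap rho * b ^+ j.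
Proof.
by case: form; rewrite /Sf rmorphB rmorphM !rmorphXn /= ?H2C ?ev1X ?H2X ?ev1C.
Qed.

Definition nc (x : L) := exists s m, [/\ s != 0, (0 < m)%N & x = kap s * tL ^+ m].

Lemma tL_neq0 : tL != 0.
Proof.
apply/eqP => h; have : phi 'X = phi 0 by rewrite rmorph0.
by move/phi_inj/eqP; rewrite polyX_eq0.
Qed.

Lemma nc_tL : nc tL.
Proof. by exists 1, 1%N; rewrite oner_neq0 rmorph1 mul1r expr1. Qed.

Lemma nth_root (n : nat) (c : C) : (0 < n)%N -> exists s, s ^+ n = c.
Proof.
move=> n0; have /closed_rootP [s hs] : size ('X^n - c%:P) != 1%N.
  by rewrite size_XnsubC //; case: n n0.
by exists s; move: hs; rewrite /root !hornerE subr_eq0 => /eqP.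
Qed.

Lemma choose_point form i j rho : (0 < i + j)%N -> rho != 0 ->
  exists a b, [/\ H2 a b (Sf form i j rho) = 0, b != 0 & nc a \/ nc b].
Proof.
move=> ij0 nzr.
have nzs : forall s n, (0 < n)%N -> s ^+ n = rho -> s != 0.
  by move=> s n n0 hs; apply: contra_neq nzr => s0; rewrite -hs s0 expr0n; case: n n0 hs.
have tLn : forall n, tL ^+ n != 0 by move=> n; rewrite expf_neq0 // tL_neq0.
have [i0|ip] := posnP i; [subst i|]; last first.
  have [j0|jp] := posnP j; [subst j|].
    have [s hs] := nth_root rho ip.
    exists (kap s), tL; split; [| exact: tL_neq0 | right; exact: nc_tL].
    by rewrite H2_S; case: form; rewrite !expr0 ?mulr1 -rmorphXn hs subrr.
  have [s hs] := nth_root rho ip.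
  case: form.
    exists (kap s * tL ^+ j), (tL ^+ i)^-1; split.
    - rewrite H2_S exprMn -rmorphXn hs -!exprM exprVn -!exprM mulnC.
      by rewrite -mulrA mulfV ?mulr1 ?subrr // tLn.
    - by rewrite invr_eq0 tLn.
    - by left; exists s, j; split => //; exact: nzs hs.
  exists (kap s * tL ^+ j), (tL ^+ i); split.
  - by rewrite H2_S exprMn -rmorphXn hs -!exprM mulnC subrr.
  - exact: tLn.
  - by left; exists s, j; split => //; exact: nzs hs.
have jp : (0 < j)%N by [].
case: form.
  have [s hs] := nth_root rho jp.
  exists tL, (kap s); split; [| | left; exact: nc_tL].
  - by rewrite H2_S expr0 mul1r -rmorphXn hs subrr.
  - by rewrite fmorph_eq0; exact: nzs hs.
have [s hs] := nth_root rho^-1 jp.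
exists tL, (kap s); split; [| | left; exact: nc_tL].
- by rewrite H2_S expr0 -rmorphXn -rmorphM hs mulfV // rmorph1 subrr.
- rewrite fmorph_eq0; apply: contra_neq nzr => s0.
  by move: hs; rewrite s0 expr0n; case: (j) jp => // k _ /esym /eqP; rewrite invr_eq0 => /eqP.
Qed.

End Conn.
Section Fin.
Variables (C L : closedFieldType) (iota : {rmorphism {fraction {poly C}} -> L}).
Local Notation phi := (phi iota).
Local Notation kap := (kap iota).
Local Notation H2 := (H2 iota).

Lemma not_indep form i j (rho : C) k h1 h2 : (0 < i + j)%N -> (0 < k)%N ->
  rho ^+ k = 1 -> h2 != 0 -> H2 h1 h2 (Sf form i j rho) = 0 -> ~ mult_indep h1 h2.
Proof.
move=> ij0 k0 rk nz2 hS hind; move: hS; rewrite H2_S.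
have kr : kap rho ^+ k = 1 by rewrite -rmorphXn rk rmorph1.
have fin : (i * k)%N = 0%N -> (j * k)%N = 0%N -> False.
  by move=> /eqP; rewrite muln_eq0 (negPf (lt0n_neq0 k0)) orbF => /eqP i0 /eqP;
     rewrite muln_eq0 (negPf (lt0n_neq0 k0)) orbF => /eqP j0; move: ij0; rewrite i0 j0.
case: form => /eqP; rewrite subr_eq0 => /eqP E.
- have H : h1 ^ (i * k)%N * h2 ^ (j * k)%N = 1.
    change (h1 ^+ (i * k) * h2 ^+ (j * k) = 1).
    by rewrite !exprM -exprMn E kr.
  have [a b] := hind _ _ H; apply: fin; [by case: a | by case: b].
- have H : h1 ^ (i * k)%N * h2 ^ (- (j * k)%N%:Z) = 1.
    rewrite -exprnN; change (h1 ^+ (i * k) * h2 ^- (j * k) = 1).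
    rewrite !exprM E exprMn kr mul1r -exprM mulfV //.
    by rewrite expf_neq0.
  have [a b] := hind _ _ H; apply: fin; first by case: a.
  by move/eqP: b; rewrite oppr_eq0 => /eqP [].
Qed.
End Fin.

Section Main.
Variables (R : realType) (L : closedFieldType)
  (iota : {rmorphism {fraction {poly R[i]}} -> L}).
Local Notation C := (R[i]).

Lemma Pf_eq n (f : {poly 'M[C]_n.+1}) : Pf f = map_poly polyC (Pc (evalXI f)).
Proof.
rewrite /Pf /Pc -det_map_mx; congr (\det _).
apply/matrixP => i j; rewrite !mxE rmorphB rmorphMn /= map_polyC /liftX.
by rewrite -map_poly_comp.
Qed.

Lemma Pg_eq n (g : {poly 'M[C]_n.+1}) :
  Pg g = map_poly (map_poly polyC) (Pc (evalXI g)).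
Proof.
rewrite /Pg /Pc -det_map_mx; congr (\det _).
apply/matrixP => i j; rewrite !mxE rmorphB rmorphMn /= map_polyC /= map_polyX /liftX.
rewrite -map_poly_comp; congr (_ - _); apply: eq_map_poly => c /=.
by rewrite map_polyC.
Qed.

Lemma T_eq (d : {poly C}) :
  (y2 R)%:P - liftX d = map_poly (map_poly polyC) (Qc d).
Proof.
rewrite /Qc rmorphB /= map_polyC /= map_polyX /liftX -map_poly_comp.
by congr (_ - _); apply: eq_map_poly => c /=; rewrite map_polyC.
Qed.

Lemma special_factor P : has_special_factor P ->
  exists form i j (rho : C) k, [/\ (0 < i + j)%N, (0 < k)%N, rho ^+ k = 1 &
     exists q, P = q * Sf form i j rho].
Proof.
move=> [i [j [rho [ij0 [k k0 rk] Hf]]]].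
case: Hf => [[q E]|[q E]]; [exists true | exists false];
  by exists i, j, rho, k; split => //; exists q.
Qed.

Lemma eig n (f : {poly 'M[C]_n.+1}) h :
  root (map_poly (phi iota) (char_poly (evalXI f))) h -> eigenvalue (embXI iota f) h.
Proof.
by rewrite map_char_poly eigenvalue_root_char.
Qed.

Lemma rho_neq0 (rho : C) k : (0 < k)%N -> rho ^+ k = 1 -> rho != 0.
Proof.
by move=> k0 rk; apply/eqP => r0; move: rk; rewrite r0 expr0n; case: k k0 => //= k _ /eqP; rewrite eq_sym oner_eq0.
Qed.

End Main.

Theorem lemma2p1 (R : realType) (n : nat) (f g : {poly 'M[R[i]]_n.+1})
  (hf : (1 < size f)%N) (hg : (1 < size g)%N)
  (L : closedFieldType) (iota : {rmorphism {fraction {poly R[i]}} -> L})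
  (hL : algebraic_ext iota) :
  ((forall h1 h2 : L, eigenvalue (embXI iota f) h1 ->
      eigenvalue (embXI iota g) h2 -> mult_indep h1 h2) ->
    ~ has_special_factor (Rfg f g)) /\
  ((forall h1 : L, eigenvalue (embXI iota f) h1 ->
      mult_indep h1 (iota (tofrac (\det (evalXI g))))) ->
    ~ has_special_factor (Tfg f g)).
Proof.
split.
- move=> Hind /special_factor [form [i [j [rho [k [ij0 k0 rk [q E]]]]]]].
  have nzr := rho_neq0 k0 rk.
  have [a [b [Sab nzb hnc]]] := choose_point iota form ij0 nzr.
  have [h1 [h2 [r1 r2 nz2 S12]]] := core (Pa := Pc (evalXI f)) (Pb := Pc (evalXI g))
    (ca := char_poly (evalXI f)) (cb := char_poly (evalXI g)) (Pc_neq0 iota _) (Pc_neq0 iota _)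
    (char_poly_monic _) (char_poly_monic _) (@compatP _ _ iota _ _) (@compatP _ _ iota _ _)
    (ex_intro _ q (etrans (esym (congr2 (@resultant _) (Pf_eq f) (Pg_eq g))) E)) Sab nzb hnc.
  apply: (not_indep ij0 k0 rk nz2 S12); apply: Hind; exact: eig.
- move=> Hind /special_factor [form [i [j [rho [k [ij0 k0 rk [q E]]]]]]].
  have nzr := rho_neq0 k0 rk.
  have [a [b [Sab nzb hnc]]] := choose_point iota form ij0 nzr.
  have [h1 [h2 [r1 r2 nz2 S12]]] := core (Pa := Pc (evalXI f)) (Pb := Qc (\det (evalXI g)))
    (ca := char_poly (evalXI f)) (cb := 'X - (\det (evalXI g))%:P) (Pc_neq0 iota _) (Qc_neq0 iota _)
    (char_poly_monic _) (monicXsubC _) (@compatP _ _ iota _ _) (@compatQ _ _ iota _)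
    (ex_intro _ q (etrans (esym (congr2 (@resultant _) (Pf_eq f) (T_eq _))) E)) Sab nzb hnc.
  apply: (not_indep ij0 k0 rk nz2 S12).
  move: r2; rewrite rmorphB /= map_polyX map_polyC root_XsubC => /eqP ->.
  by apply: Hind; exact: eig.
Qed.
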